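(* Let $k \geq 2$ and let $G_k=(V_k,E_k)$ be the bipartite graph with vertex set $V_k=\{x,y\}\cup \{u_i,v_i \mid 1\leq i\leq 2k-2\}$ and edge set $E_k=\{\{x,y\}\}\cup\{\{x,u_{2j-1}\},\{x,v_{2j-1}\} \mid 1 \leq j\leq k-1\}$. Let $G$ be a graph that contains $G_k$ as an induced subgraph, and let $t$ be the minimum integer for which $G$ is a $t$-interval-PCG, i.e. $G=t\textnormal{-}PCG(T,I_1,\ldots, I_t)$ for some edge-weighted tree $T$ and disjoint intervals $I_1,\ldots,I_t$. For $1\leq i\leq 2k-2$, write $[u_i,v_i]$ for the vertex set $\{u_i, u_{i+1}, \ldots, u_{2k-2}, y, v_{2k-2}, v_{2k-3},\ldots, v_i\}$. If for each $i$, $1\leq i\leq 2k-2$, the path $P_T(u_i,v_i)$ is the longest path in $T_{[u_i,v_i]}$, then $t\geq k$.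
   Context: All trees are unrooted with edges weighted by nonnegative reals. For leaves $u,v$ of a tree $T$, $P_T(u,v)$ is the unique path between them and $d_T(u,v)$ the sum of its edge weights; for a set $L$ of leaves, $T_L$ is the minimal subtree of $T$ containing $L$. Given a tree $T$ and $k\ge1$ disjoint intervals $I_1,\ldots,I_k$ of nonnegative reals, $k\textnormal{-}PCG(T,I_1,\ldots,I_k)$ (a $k$-interval-PCG, or multi-interval PCG) is the graph whose vertex set is the leaf set of $T$ and in which $\{u,v\}$ is an edge iff $d_T(u,v)\in I_i$ for some $i$, $1\le i\le k$. *)

(* Defs.v *)
From HB Require Import structures.
From mathcomp Require Import all_boot all_order all_algebra.
From mathcomp Require Import reals.
Set Implicit Arguments. Unset Strict Implicit. Unset Printing Implicit Defensive.
Import Order.TTheory GRing.Theory Num.Theory.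
Local Open Scope ring_scope.

Section Trees.
Variables (R : realType) (V : finType) (adj : rel V) (w : V -> V -> R).

Definition upath (a b : V) (p : seq V) : bool :=
  [&& path adj a p, last a p == b & uniq (a :: p)].

Fixpoint pweight (a : V) (p : seq V) : R :=
  if p is c :: q then w a c + pweight c q else 0.

Definition is_wtree : Prop :=
  [/\ symmetric adj, irreflexive adj,
      (forall a b, adj a b -> 0 <= w a b /\ w a b = w b a) &
      (forall a b, exists! p, upath a b p)].

Definition is_leaf (z : V) : bool := #|[set c | adj z c]| == 1%N.

(* vertex set of the minimal subtree T_L containing L *)
Definition in_span (L : {set V}) (z : V) : Prop :=
  exists a b p, [/\ a \in L, b \in L, upath a b p & z \in a :: p].

Definition longest_in (L : {set V}) (a b : V) : Prop :=
  forall p c d q, upath a b p -> in_span L c -> in_span L d -> upath c d q ->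
    pweight c q <= pweight a p.
End Trees.

(* G = t-PCG(T, I_1..I_t), the leaves of T being identified with the vertices
   of G via the bijection f from V(G) onto the leaves of T *)
Definition PCG_rep (R : realType) (VG : finType) (eG : rel VG) (t : nat)
  (VT : finType) (adj : rel VT) (w : VT -> VT -> R) (I : 'I_t -> interval R)
  (f : VG -> VT) : Prop :=
  [/\ (0 < t)%N, is_wtree adj w,
      (forall i x, x \in I i -> 0 <= x),
      (forall i j, i != j -> forall x, ~~ ((x \in I i) && (x \in I j))) &
      [/\ injective f,
      (forall z, is_leaf adj z <-> exists g, f g = z) &
      (forall a b, a != b ->
         (eG a b <-> forall p, upath adj (f a) (f b) p ->
                       exists i, pweight w (f a) p \in I i))]].

Definition is_tPCG (R : realType) (VG : finType) (eG : rel VG) (t : nat) : Prop :=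
  exists (VT : finType) (adj : rel VT) (w : VT -> VT -> R)
         (I : 'I_t -> interval R) (f : VG -> VT), PCG_rep eG adj w I f.

(* The graph G_k. Vertices: inl false = x, inl true = y,
   inr (false, j) = u_{j+1}, inr (true, j) = v_{j+1}, for j : 'I_(2k-2). *)
Definition Gk_vertex (k : nat) : finType := (bool + (bool * 'I_(2 * k - 2)))%type.

Definition Gk_edge (k : nat) (a b : Gk_vertex k) : bool :=
  match a, b with
  | inl false, inl true | inl true, inl false => true
  | inl false, inr (_, j) | inr (_, j), inl false => ~~ odd j
  | _, _ => false
  end.

Definition Gk_u (k : nat) (j : 'I_(2 * k - 2)) : Gk_vertex k := inr (false, j).
Definition Gk_v (k : nat) (j : 'I_(2 * k - 2)) : Gk_vertex k := inr (true, j).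

(* [u_{i+1}, v_{i+1}] = {u_j, v_j | j >= i+1} ∪ {y} *)
Definition Gk_seg (k : nat) (i : 'I_(2 * k - 2)) : {set Gk_vertex k} :=
  [set z : Gk_vertex k | match z with inl b => b | inr (_, j) => (i <= j)%N end].

(* Main.v *)
Require Import Defs.
From HB Require Import structures.
From mathcomp Require Import all_boot all_order all_algebra.
From mathcomp Require Import reals.
From mathcomp Require Import lra zify.
Import Order.TTheory GRing.Theory Num.Theory.
Local Open Scope ring_scope.

Lemma split_mem (T : eqType) (a m : T) p :
  m \in a :: p -> exists p1 p2, p = p1 ++ p2 /\ last a p1 = m.
Proof.
elim: p a => [|c p IH] a.
  by rewrite inE => /eqP->; exists [::], [::].
rewrite in_cons => /orP[/eqP->|]; first by exists [::], (c :: p).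
by move=> /IH[p1 [p2 [-> <-]]]; exists (c :: p1), p2.
Qed.

Lemma first_in (T : eqType) (S : seq T) z q : last z q \in S ->
  exists q1 q2, q = q1 ++ q2 /\ last z q1 \in S /\
     all (fun y => y \notin S) (belast z q1).
Proof.
elim: q z => [|c q IH] z /= h; first by exists [::], [::]; rewrite h.
case hz: (z \in S); first by exists [::], (c :: q); rewrite hz.
have [q1 [q2 [-> [h1 h2]]]] := IH c h.
by exists (c :: q1), q2 => /=; rewrite hz h1 h2.
Qed.

Lemma last_rev_belast (T : Type) (a : T) p : last (last a p) (rev (belast a p)) = a.
Proof. by case: p => [|c p] //=; rewrite rev_cons last_rcons. Qed.

Arguments split_mem {T a m p}.
Arguments first_in {T S z q}.
Section Tree.
Set Implicit Arguments. Unset Strict Implicit.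
Variables (R : realType) (V : finType) (adj : rel V) (w : V -> V -> R).
Hypothesis Hsym : symmetric adj.
Hypothesis Hw : forall a b, adj a b -> 0 <= w a b /\ w a b = w b a.
Hypothesis Hu : forall a b, exists! p, upath adj a b p.

Lemma pweight_cat a p1 p2 :
  pweight w a (p1 ++ p2) = pweight w a p1 + pweight w (last a p1) p2.
Proof. elim: p1 a => [|c p1 IH] a /=; first by rewrite add0r. by rewrite IH addrA. Qed.

Lemma pweight_ge0 a p : path adj a p -> 0 <= pweight w a p.
Proof.
elim: p a => [|c p IH] a //= /andP[h1 h2].
by rewrite addr_ge0 // ?IH // (Hw h1).1.
Qed.

Lemma upath_cat a b p1 p2 : upath adj a b (p1 ++ p2) ->
  upath adj a (last a p1) p1 /\ upath adj (last a p1) b p2.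
Proof.
rewrite /upath cat_path last_cat => /and3P[/andP[h1 h2] h3 h4].
have := h4; rewrite -cat_cons cat_uniq => /and3P[u1 u2 u3].
rewrite h1 h2 h3 eqxx u1 /=; split => //.
rewrite u3 andbT; apply: contra u2 => hm.
by apply/hasP; exists (last a p1) => //; exact: mem_last.
Qed.

Lemma upath_uniq a b p q : upath adj a b p -> upath adj a b q -> p = q.
Proof. by case: (Hu a b) => r [_ H] hp hq; rewrite -(H p hp) -(H q hq). Qed.

Lemma ex_path a b : exists p, upath adj a b p.
Proof. by case: (Hu a b) => p [h _]; exists p. Qed.

Definition pth a b := xchoose (ex_path a b).
Definition D a b := pweight w a (pth a b).

Lemma pthP a b : upath adj a b (pth a b).
Proof. exact: xchooseP. Qed.

Lemma DE a b p : upath adj a b p -> D a b = pweight w a p.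
Proof. by move=> hp; rewrite /D (upath_uniq (pthP a b) hp). Qed.

Lemma D_ge0 a b : 0 <= D a b.
Proof. by have /and3P[h _ _] := pthP a b; exact: pweight_ge0. Qed.

Lemma D_split a b p m : upath adj a b p -> m \in a :: p -> D a b = D a m + D m b.
Proof.
move=> hp /split_mem [p1 [p2 [e hl]]]; subst p.
have [h1 h2] := upath_cat hp.
by rewrite -hl (DE hp) (DE h1) (DE h2) pweight_cat.
Qed.

Lemma upath_rev a b p : upath adj a b p -> upath adj b a (rev (belast a p)).
Proof.
rewrite /upath => /and3P[hp /eqP hl hu]; subst b.
rewrite last_rev_belast eqxx rev_path -rev_rcons -lastI rev_uniq hu andbT.
rewrite andbT.
by rewrite (@eq_path _ _ adj) // => x y; rewrite Hsym.
Qed.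

Lemma pweight_rev a p : path adj a p ->
  pweight w (last a p) (rev (belast a p)) = pweight w a p.
Proof.
elim: p a => [|c p IH] a //= /andP[h1 h2].
rewrite rev_cons -cats1 pweight_cat IH // last_rev_belast /= addr0 addrC.
by rewrite (Hw h1).2.
Qed.

Lemma D_sym a b : D a b = D b a.
Proof.
have hp := pthP a b; have := upath_rev hp => /DE ->.
have /and3P[h /eqP hl _] := hp.
by have := pweight_rev h; rewrite hl => ->.
Qed.

Lemma median u v z p : upath adj u v p -> exists m,
  [/\ m \in u :: p, D z u = D z m + D m u & D z v = D z m + D m v].
Proof.
move=> hp; have hq := pthP z u.
have hl : last z (pth z u) \in u :: p.
  by have /and3P[_ /eqP -> _] := hq; rewrite mem_head.
have [q1 [q2 [eq [hm hb]]]] := first_in hl.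
move: hq; rewrite eq => hq.
have [hq1 hq2] := upath_cat hq.
exists (last z q1); split => //.
  by rewrite (DE hq) (DE hq1) (DE hq2) pweight_cat.
have [p1 [p2 [ep hl1]]] := split_mem hm.
move: hp; rewrite ep => hp.
have [_ hp2] := upath_cat hp; rewrite hl1 in hp2.
have hzv : upath adj z v (q1 ++ p2).
  move: hq1 hp2; rewrite /upath => /and3P[a1 _ a3] /and3P[b1 b2 b3].
  rewrite /upath cat_path a1 last_cat b1 b2 /=.
  rewrite (_ : (z \notin q1 ++ p2) && uniq (q1 ++ p2) = uniq ((z :: q1) ++ p2)) // cat_uniq a3 /=.
  move: b3 => /= /andP[b3 b4]; rewrite b4 andbT.
  apply/hasPn => y hy; rewrite (lastI z q1) mem_rcons in_cons.
  apply/negP => /orP[/eqP eym | hyb].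
    by rewrite -eym hy in b3.
  have := allP hb y hyb; rewrite ep in_cons mem_cat hy orbT.
  by rewrite orbT.
by rewrite (DE hzv) (DE hq1) (DE hp2) pweight_cat.
Qed.

Lemma order_on u v p m n : upath adj u v p -> m \in u :: p -> n \in u :: p ->
  D n v = D n m + D m v \/ D m v = D m n + D n v.
Proof.
move=> hp hm hn.
have [p1 [p2 [ep hl1]]] := split_mem hm.
move: hp hn; rewrite ep => hp hn.
have [_ hp2] := upath_cat hp; rewrite hl1 in hp2.
case hn2: (n \in m :: p2); first by right; exact: D_split hp2 hn2.
have : n \in u :: p1.
  by move: hn; rewrite -cat_cons mem_cat; rewrite in_cons in hn2; case/orP=> // h; rewrite h orbT in hn2.
move=> /split_mem [r1 [r2 [er hr]]].
move: hp; rewrite er -catA => hp.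
have [_ hp3] := upath_cat hp; rewrite hr in hp3.
left; apply: D_split hp3 _.
by rewrite -hl1 er last_cat hr -cat_cons mem_cat mem_last.
Qed.

Lemma triangle a b c : D a c <= D a b + D b c.
Proof.
have [m [hm e1 e2]] := median b (pthP a c).
rewrite (D_split (pthP a c) hm) (D_sym a b) e1 e2 (D_sym a m).
have := D_ge0 b m; lra.
Qed.

Lemma key x z u v : D z u <= D u v -> D z v <= D u v ->
  D x z <= Num.max (D x u) (D x v).
Proof.
move=> h1 h2; have hp := pthP u v.
have [m [hm e1 e2]] := median z hp.
have [n [hn f1 f2]] := median x hp.
have g1 := D_split hp hm; have g2 := D_split hp hn.
have t1 := triangle x m z; have t2 := triangle x n m.
have s1 := D_sym m z; have s2 := D_sym m u; have s3 := D_sym n u;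
have s4 := D_sym n m.
rewrite le_max; case: (order_on hp hm hn) => o.
  by apply/orP; right; lra.
by apply/orP; left; lra.
Qed.
End Tree.

Lemma itv_convex (R : realType) (J : interval R) (a b c : R) :
  a <= b -> b <= c -> a \in J -> c \in J -> b \in J.
Proof.
case: J => l r; rewrite !itv_boundlr => hab hbc /andP[la _] /andP[_ cr].
apply/andP; split.
  by apply: le_trans la _; rewrite leBSide /=.
by apply: le_trans cr; rewrite leBSide /=.
Qed.

Theorem lemma2 (R : realType) (k : nat) (hk : (2 <= k)%N)
  (VG : finType) (eG : rel VG) (Gsym : symmetric eG) (Girr : irreflexive eG)
  (emb : Gk_vertex k -> VG) (emb_inj : injective emb)
  (emb_ind : forall a b, eG (emb a) (emb b) = Gk_edge a b)
  (t : nat) (VT : finType) (adj : rel VT) (w : VT -> VT -> R)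
  (I : 'I_t -> interval R) (f : VG -> VT)
  (Hrep : PCG_rep eG adj w I f)
  (Hmin : forall t', (0 < t' < t)%N -> ~ is_tPCG R eG t')
  (Hlong : forall i : 'I_(2 * k - 2),
     longest_in adj w [set f (emb z) | z in Gk_seg i]
                (f (emb (Gk_u i))) (f (emb (Gk_v i)))) :
  (k <= t)%N.
Proof.
case: Hrep => ht [Hsym Hirr Hw Hu] Hnn Hdisj [finj fleaf fedge].
pose X := f (emb (inl false)).
pose dX (z : Gk_vertex k) := D w Hu X (f (emb z)).
pose inI (r : R) := exists i, r \in I i.
have Hedge : forall z, z != inl false -> (Gk_edge (inl false) z <-> inI (dX z)).
  move=> z hz; rewrite -emb_ind.
  have hne : emb (inl false) != emb z by rewrite (inj_eq emb_inj) eq_sym.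
  rewrite (fedge _ _ hne); split.
    move=> H; have [i hi] := H _ (pthP Hu X (f (emb z))); by exists i.
  by move=> [i hi] p hp; exists i; rewrite -(DE w Hu hp).
pose M (j : 'I_(2*k-2)) := Num.max (dX (Gk_u j)) (dX (Gk_v j)).
have Mbound : forall (j : 'I_(2*k-2)) z, z \in Gk_seg j -> dX z <= M j.
  move=> j z hz.
  have span : forall z, z \in Gk_seg j ->
      in_span adj [set f (emb z) | z in Gk_seg j] (f (emb z)).
    move=> z0 hz0; exists (f (emb z0)), (f (emb z0)), [::]; split.
    - exact: (imset_f (fun z => f (emb z))).
    - exact: (imset_f (fun z => f (emb z))).
    - by rewrite /upath /= eqxx.
    - exact: mem_head.
  have hu : Gk_u j \in Gk_seg j by rewrite inE /=.
  have hv : Gk_v j \in Gk_seg j by rewrite inE /=.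
  apply: (key Hsym Hw).
    exact: (Hlong j _ _ _ _ (pthP Hu _ _) (span _ hz) (span _ hu) (pthP Hu _ _)).
  exact: (Hlong j _ _ _ _ (pthP Hu _ _) (span _ hz) (span _ hv) (pthP Hu _ _)).
have Heven : forall j : 'I_(2*k-2), ~~ odd j -> inI (M j).
  by move=> j hj; rewrite /M maxEle; case: ifP => _; [apply/(Hedge (Gk_v j) isT) | apply/(Hedge (Gk_u j) isT)].
have Hodd : forall j : 'I_(2*k-2), odd j -> ~ inI (M j).
  move=> j hj; rewrite /M maxEle; case: ifP => _ H.
    by have := (Hedge (Gk_v j) isT).2 H; rewrite /= hj.
  by have := (Hedge (Gk_u j) isT).2 H; rewrite /= hj.
pose Mn (n : nat) := if (insub n : option 'I_(2*k-2)) is Some j then M j else 0.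
have MnE : forall j : 'I_(2*k-2), Mn j = M j by move=> j; rewrite /Mn valK.
have F1 : forall n, (n < 2*k-2)%N -> ~~ odd n -> inI (Mn n).
  by move=> n hn ho; have := Heven (Ordinal hn) ho; rewrite -MnE.
have F2 : forall n, (n < 2*k-2)%N -> odd n -> ~ inI (Mn n).
  by move=> n hn ho; have := Hodd (Ordinal hn) ho; rewrite -MnE.
have F3 : forall n n', (n <= n')%N -> (n' < 2*k-2)%N -> Mn n' <= Mn n.
  move=> n n' h1 h2; have h3 : (n < 2*k-2)%N by apply: leq_ltn_trans h2.
  rewrite (MnE (Ordinal h2)) (MnE (Ordinal h3)).
  by rewrite {1}/M ge_max !Mbound // inE /=.
have F4 : forall n, (n < 2*k-2)%N -> dX (inl true) <= Mn n.
  by move=> n hn; rewrite (MnE (Ordinal hn)) Mbound // inE.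
have F5 : inI (dX (inl true)) by apply/(Hedge (inl true) isT).
pose vl (c : nat) := if (c.+1 < k)%N then Mn (2*c)%N else dX (inl true).
have Hval : forall c : 'I_k, exists i, vl c \in I i.
  move=> c; rewrite /vl; case: ifP => h; last exact: F5.
  apply: F1; first lia.
  by rewrite oddM.
have [idx Hidx] := fin_all_exists Hval.
have Hsep : forall c c' : 'I_k, (c < c')%N -> idx c != idx c'.
  move=> c c' hc; apply/negP => /eqP e.
  have hc1 : (c.+1 < k)%N by have := ltn_ord c'; lia.
  have hlo : vl c' <= Mn (2*c).+1.
    rewrite /vl; case: ifP => h.
      by apply: F3; lia.
    by apply: F4; lia.
  have hhi : Mn (2*c).+1 <= vl c by rewrite /vl hc1; apply: F3; lia.
  apply: (F2 (2*c).+1); first lia.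
    by rewrite /= oddM.
  exists (idx c); apply: itv_convex hlo hhi _ _; first by rewrite e.
  exact: Hidx.
have inj : injective idx.
  move=> c c' e; apply/val_inj/eqP; case: (ltngtP c c') => // h.
    by have := Hsep _ _ h; rewrite e eqxx.
  by have := Hsep _ _ h; rewrite e eqxx.
by have := @leq_card _ _ idx inj; rewrite !card_ord.
Qed.
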